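(* Let $I,J\in\mathbb Z$ with $4I^3\ne J^2$, and let \[ g(a,c,d)=(I-12d+3ac)(96d+3ac-2I)^2-(J+27c^2+27a^2d)^2 . \] Then the affine surface $Y_{I,J}\subset\mathbb A^3$ defined by $g(a,c,d)=0$ contains no rational lines, i.e. there is no set $\{(\alpha,\gamma,\delta)+t(A,C,D): t\in\mathbb Q\}$ with $(\alpha,\gamma,\delta)\in\mathbb Q^3$ and $(A,C,D)\in\mathbb Q^3\setminus\{\mathbf 0\}$ contained in the zero set of $g$. *)

(* Defs.v *)
From mathcomp Require Import all_boot all_order all_algebra.
Set Implicit Arguments. Unset Strict Implicit. Unset Printing Implicit Defensive.
Import Order.TTheory GRing.Theory Num.Theory.
Local Open Scope ring_scope.

Definition g_IJ (I J : int) (a c d : rat) : rat :=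
  (I%:~R - 12 * d + 3 * a * c) * (96 * d + 3 * a * c - 2 * I%:~R) ^+ 2
  - (J%:~R + 27 * c ^+ 2 + 27 * a ^+ 2 * d) ^+ 2.

Definition line_in_Y (I J : int) (al ga de A C D : rat) : Prop :=
  forall t : rat, g_IJ I J (al + t * A) (ga + t * C) (de + t * D) = 0.

(* Main.v *)
Require Import Defs.
From mathcomp Require Import all_boot all_order all_algebra.
From mathcomp Require Import ring lra.
Import Order.TTheory GRing.Theory Num.Theory.
Local Open Scope ring_scope.
Ltac nz := rewrite pnatr_eq0.
Ltac nzn := rewrite oppr_eq0 pnatr_eq0.

Lemma poly7 (c0 c1 c2 c3 c4 c5 c6 : rat) :
  (forall t : rat, c0 + c1 * t + c2 * t ^+ 2 + c3 * t ^+ 3 + c4 * t ^+ 4 + c5 * t ^+ 5 + c6 * t ^+ 6 = 0) ->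
  (c0 = 0 /\ c1 = 0 /\ c2 = 0 /\ c3 = 0 /\ c4 = 0 /\ c5 = 0 /\ c6 = 0).
Proof.
move=> H.
have h0 := H 0; have h1 := H 1; have h2 := H 2; have h3 := H 3;
have h4 := H (-1); have h5 := H (-2); have h6 := H (-3).
rewrite !expr0n /= in h0.
by do !split; lra.
Qed.

Lemma scale0 (k P : rat) : k != 0 -> k * P = 0 -> P = 0.
Proof. by move=> hk /eqP; rewrite mulf_eq0 (negbTE hk) => /eqP. Qed.

Definition G (x y a c d : rat) : rat :=
  (x - 12 * d + 3 * a * c) * (96 * d + 3 * a * c - 2 * x) ^+ 2
  - (y + 27 * c ^+ 2 + 27 * a ^+ 2 * d) ^+ 2.

Lemma expA0 (x y al g e C D t : rat) :
  G x y al (g + t * C) (e + t * D) = (- 729 * g ^+ 4 + 27 * g ^+ 3 * al ^+ 3 + 162 * g ^+ 2 * e * al ^+ 2 - 27 * g ^+ 2 * al ^+ 2 * x - 54 * g ^+ 2 * y + (20 * 1000 + 736) * g * e ^+ 2 * al - 432 * g * e * al * x - (110 * 1000 + 592) * e ^+ 3 - 729 * e ^+ 2 * al ^+ 4 + (13 * 1000 + 824) * e ^+ 2 * x - 54 * e * al ^+ 2 * y - 432 * e * x ^+ 2 + 4 * x ^+ 3 - y ^+ 2) + (- (2 * 1000 + 916) * g ^+ 3 * C + 81 * g ^+ 2 * al ^+ 3 * C + 162 * g ^+ 2 * al ^+ 2 * D + 324 * g * e * al ^+ 2 * C + (41 * 1000 + 472) * g * e * al * D - 54 * g * al ^+ 2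 * x * C - 432 * g * al * x * D - 108 * g * y * C + (20 * 1000 + 736) * e ^+ 2 * al * C - (331 * 1000 + 776) * e ^+ 2 * D - (1 * 1000 + 458) * e * al ^+ 4 * D - 432 * e * al * x * C + (27 * 1000 + 648) * e * x * D - 54 * al ^+ 2 * y * D - 432 * x ^+ 2 * D) * t + (- (4 * 1000 + 374) * g ^+ 2 * C ^+ 2 + 81 * g * al ^+ 3 * C ^+ 2 + 324 * g * al ^+ 2 * C * D + (20 * 1000 + 736) * g * al * D ^+ 2 + 162 * e * al ^+ 2 * C ^+ 2 + (41 * 1000 + 472) * e * al * C * D - (331 * 1000 + 776) * e * D ^+ 2 - 729 * al ^+ 4 * D ^+ 2 - 27 * al ^+ 2 * x * C ^+ 2 - 432 * al * x * C * D + (13 * 1000 + 824) * x * D ^+ 2 - 54 * y * C ^+ 2) * t ^+ 2 + (- (2 * 1000 + 916) * g * C ^+ 3 + 27 * al ^+ 3 * C ^+ 3 + 162 * al ^+ 2 * C ^+ 2 * D + (20 * 1000 + 736) * al * C * D ^+ 2 - (110 * 1000 + 592) * D ^+ 3) * t ^+ 3 + (- 729 * C ^+ 4) * t ^+ 4 + 0 * t ^+ 5 + 0 * t ^+ 6.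
Proof. rewrite /G; ring. Qed.

Lemma expA1 (x y g e C D t : rat) :
  G x y t (g + t * C) (e + t * D) = (- 729 * g ^+ 4 - 54 * g ^+ 2 * y - (110 * 1000 + 592) * e ^+ 3 + (13 * 1000 + 824) * e ^+ 2 * x - 432 * e * x ^+ 2 + 4 * x ^+ 3 - y ^+ 2) + (- (2 * 1000 + 916) * g ^+ 3 * C + (20 * 1000 + 736) * g * e ^+ 2 - 432 * g * e * x - 108 * g * y * C - (331 * 1000 + 776) * e ^+ 2 * D + (27 * 1000 + 648) * e * x * D - 432 * x ^+ 2 * D) * t + (162 * g ^+ 2 * e - 27 * g ^+ 2 * x - (4 * 1000 + 374) * g ^+ 2 * C ^+ 2 + (41 * 1000 + 472) * g * e * D - 432 * g * x * D + (20 * 1000 + 736) * e ^+ 2 * C - 432 * e * x * C - 54 * e * y - (331 * 1000 + 776) * e * D ^+ 2 + (13 * 1000 + 824) * x * D ^+ 2 - 54 * y * C ^+ 2) * t ^+ 2 + (27 * g ^+ 3 + 162 * g ^+ 2 * D + 324 * g * e * C - 54 * g * x * C - (2 * 1000 + 916) * g * C ^+ 3 + (20 * 1000 + 736) * g * D ^+ 2 + (41 * 1000 + 472) * e * C * D - 432 * x * C * D - 54 * y * D - (110 * 1000 + 592) * D ^+ 3) * t ^+ 3 + (81 * g ^+ 2 * C + 324 * g * C * D - 729 * e ^+ 2 + 162 * e * C ^+ 2 - 27 * x * C ^+ 2 - 729 * C ^+ 4 + (20 * 1000 + 736) * C * D ^+ 2) * t ^+ 4 + (81 * g * C ^+ 2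 - (1 * 1000 + 458) * e * D + 162 * C ^+ 2 * D) * t ^+ 5 + (27 * C ^+ 3 - 729 * D ^+ 2) * t ^+ 6.
Proof. rewrite /G; ring. Qed.


Lemma keyA0 (x y al g e C D : rat) :
  (forall t, G x y al (g + t * C) (e + t * D) = 0) -> C = 0 /\ D = 0.
Proof.
move=> H.
have [c0 [c1 [c2 [c3 [c4 [c5 c6]]]]]] := @poly7 _ _ _ _ _ _ _ (fun t => etrans (esym (expA0 x y al g e C D t)) (H t)).
have hC : C ^+ 4 = 0.
  by apply: (@scale0 (-729)); [nzn | apply: etrans c4; ring].
move/eqP: hC; rewrite expf_eq0 /= => /eqP hC; subst C.
have hD : D ^+ 3 = 0.
  apply: (@scale0 64); first by nz.
  apply: (@scale0 64); first by nz.
  by apply: (@scale0 (-27)); [nzn | apply: etrans c3; ring].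
move/eqP: hD; rewrite expf_eq0 /= => /eqP ->; by split.
Qed.

Lemma keyA1 (x y g e C D : rat) :
  (forall t, G x y t (g + t * C) (e + t * D) = 0) -> 4 * x ^+ 3 = y ^+ 2.
Proof.
move=> H.
have [c0 [c1 [c2 [c3 [c4 [c5 c6]]]]]] := @poly7 _ _ _ _ _ _ _ (fun t => etrans (esym (expA1 x y g e C D t)) (H t)).
case: (eqVneq C 0) => [C0|Cn0].
  subst C.
  have hD : D ^+ 2 = 0.
    by apply: (@scale0 (-729)); [nzn | apply: etrans c6; ring].
  move/eqP: hD; rewrite expf_eq0 /= => /eqP hD; subst D.
  have he : e ^+ 2 = 0.
    by apply: (@scale0 (-729)); [nzn | apply: etrans c4; ring].
  move/eqP: he; rewrite expf_eq0 /= => /eqP he; subst e.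
  have hg : g ^+ 3 = 0.
    by apply: (@scale0 27); [nz | apply: etrans c3; ring].
  move/eqP: hg; rewrite expf_eq0 /= => /eqP hg; subst g.
  apply/eqP; rewrite -subr_eq0; apply/eqP; apply: etrans c0; ring.
have h6 : 27 * C ^+ 3 = 729 * D ^+ 2.
  by apply/eqP; rewrite -subr_eq0; apply/eqP; apply: etrans c6; ring.
set s := 3 * D / C.
have hC : C = 3 * s ^+ 2.
  rewrite /s (_ : 3 * (3 * D / C) ^+ 2 = (729 * D ^+ 2) / (27 * C ^+ 2)); last by field.
  by rewrite -h6; field.
have hs2 : s ^+ 2 = C / 3 by rewrite [in RHS]hC; by field.
have hD : D = s ^+ 3 by rewrite exprS hs2 /s; by field.
clearbody s; subst C D.
have sn0 : s != 0 by apply: contraNneq Cn0 => ->; rewrite expr0n mulr0.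
have s3n0 : s ^+ 3 != 0 by rewrite expf_neq0.
set k := g / 2.
have hk : g = 2 * k by rewrite /k; by field.
clearbody k; subst g.
have h5 : s ^+ 3 * (2 * k * s - 2 * e + 2 * s ^+ 4) = 0.
  by apply: (@scale0 729); [nz | apply: etrans c5; ring].
move/eqP: h5; rewrite mulf_eq0 (negbTE s3n0) /= => /eqP h5.
have he : e = k * s + s ^+ 4.
  apply/eqP; rewrite -subr_eq0; apply/eqP.
  by apply: (@scale0 (-2)); [nzn | apply: etrans h5; ring].
subst e.
set r := (k + 4 * s ^+ 3) / s.
have hk : k = r * s - 4 * s ^+ 3 by rewrite /r; by field.
clearbody r; subst k.
have h4 : s ^+ 4 * (r ^+ 2 - x) = 0.
  by apply: (@scale0 243); [nz | apply: etrans c4; ring].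
move/eqP: h4; rewrite mulf_eq0 expf_eq0 (negbTE sn0) andbF /= subr_eq0 => /eqP hx.
subst x.
have h3 : s ^+ 3 * (y + 2 * r ^+ 3) = 0.
  by apply: (@scale0 (-54)); [nzn | apply: etrans c3; ring].
move/eqP: h3; rewrite mulf_eq0 (negbTE s3n0) /= addr_eq0 => /eqP hy.
subst y; ring.
Qed.

Theorem lemma6p1 (I J : int) (hIJ : 4 * I ^+ 3 != J ^+ 2) :
  ~ (exists al ga de A C D : rat,
        (A, C, D) != (0, 0, 0) /\ line_in_Y I J al ga de A C D).
Proof.
move=> [al [ga [de [A [C [D [hnz H]]]]]]].
have key : 4 * (I%:~R : rat) ^+ 3 = (J%:~R) ^+ 2.
  case: (eqVneq A 0) => [A0|An0].
    subst A.
    have [C0 D0] := @keyA0 I%:~R J%:~R al ga de C D (fun t =>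
      etrans (congr1 (fun z => G I%:~R J%:~R z (ga + t * C) (de + t * D))
                 (esym (etrans (congr1 (fun z => al + z) (mulr0 t)) (addr0 al)))) (H t)).
    by subst C D; rewrite eqxx in hnz.
  apply: (@keyA1 _ _ (ga - al * C / A) (de - al * D / A) (C / A) (D / A)) => s.
  have := H ((s - al) / A).
  rewrite /g_IJ.
  have -> : al + (s - al) / A * A = s by field.
  have -> : ga + (s - al) / A * C = ga - al * C / A + s * (C / A) by field.
  have -> : de + (s - al) / A * D = de - al * D / A + s * (D / A) by field.
  by [].
move: hIJ; apply/negP; rewrite negbK.
rewrite -(eqr_int rat) rmorphM rmorphXn rmorphXn /=.
by apply/eqP.
Qed.
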